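(* Let $n\in\mathbb{N}$, let $p$ be a prime and let $d,k,m\in\mathbb{N}$. Consider the system of equations \[ F_1(x_1,\ldots,x_m)=\cdots=F_k(x_1,\ldots,x_m)=0, \] where each $F_i$ is a homogeneous polynomial of degree $d$ with coefficients in $\mathbb{Z}/p^n\mathbb{Z}$. For every non-negative integer $h$ (and every $n'$), let $S(n',h)$ denote the set of solutions $(x_1,\ldots,x_m)\in(\mathbb{Z}/p^{n'}\mathbb{Z})^m$ of the system (with coefficients reduced modulo $p^{n'}$) satisfying $\min\{\nu_p(x_1),\ldots,\nu_p(x_m)\}=h$. If $0\le h<n/d$, then \[ |S(n,h)| = p^{(d-1)hm}\,|S(n-dh,0)|. \]
   Context: For a prime $p$ and $n\in\mathbb{N}$, the $p$-adic valuation $\nu_p:\mathbb{Z}/p^n\mathbb{Z}\to\{0,1,\ldots,n\}$ is defined by $\nu_p(y+p^n\mathbb{Z})=\nu_p(y)$ (the largest $j\ge 0$ with $p^j\mid y$) if $p^n\nmid y$, and $\nu_p(y+p^n\mathbb{Z})=n$ if $p^n\mid y$. *)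

(* Defs.v *)
From mathcomp Require Import all_boot all_algebra.
From mathcomp Require Import mpoly.
Set Implicit Arguments. Unset Strict Implicit. Unset Printing Implicit Defensive.
Import GRing.Theory.
Local Open Scope ring_scope.

(* p-adic valuation on Z/p^n Z, elements represented by their canonical
   representatives 0 <= y < p^n : nu_p(y) = n if y = 0, else the largest j
   with p^j | y (= logn p y). *)
Definition vpZ (p n : nat) (y : 'I_(p ^ n)) : nat :=
  if val y == 0%N then n else logn p (val y).

(* Minimum of the valuations of the coordinates of x in (Z/p^n Z)^m
   (for m = 0 the empty minimum is taken to be n, the valuation of 0). *)
Definition minval (p n m : nat) (x : {ffun 'I_m -> 'I_(p ^ n)}) : nat :=
  \big[minn/n]_(j < m) vpZ (x j).

(* S(n', h): solutions x in (Z/p^{n'} Z)^m of F_1 = ... = F_k = 0, where the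
   F_i (given by integer lifts of their coefficients) are reduced mod p^{n'},
   with min_j nu_p(x_j) = h. *)
Definition solset (p n' m k : nat) (F : 'I_k -> {mpoly int[m]}) (h : nat)
  : {set {ffun 'I_m -> 'I_(p ^ n')}} :=
  [set x : {ffun 'I_m -> 'I_(p ^ n')} | [forall i, ((p ^ n')%:Z %| (F i).@[fun j => ((x j : nat))%:Z])%Z]
           && (minval x == h)].

(* Main.v *)
Require Import Defs.
From mathcomp Require Import all_boot all_algebra.
From mathcomp Require Import mpoly.
From mathcomp Require Import ring zify.
Import GRing.Theory Num.Theory.
Local Open Scope ring_scope.

Lemma cong_meval (m : nat) (P : {mpoly int[m]}) (N : int) (a b : 'I_m -> int) :
  (forall j, (N %| a j - b j)%Z) -> (N %| P.@[a] - P.@[b])%Z.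
Proof.
rewrite !mevalE => H.
pose R := fun x y : int => (N %| x - y)%Z.
have R0 : forall x, R x x by move=> x; rewrite /R subrr dvdz0.
have RD : forall x1 x2 y1 y2, R x1 x2 -> R y1 y2 -> R (x1 + y1) (x2 + y2).
  move=> x1 x2 y1 y2; rewrite /R => h1 h2.
  have -> : x1 + y1 - (x2 + y2) = (x1 - x2) + (y1 - y2) by ring.
  exact: rpredD.
have RM : forall x1 x2 y1 y2, R x1 x2 -> R y1 y2 -> R (x1 * y1) (x2 * y2).
  move=> x1 x2 y1 y2; rewrite /R => h1 h2.
  have -> : x1 * y1 - x2 * y2 = x1 * (y1 - y2) + (x1 - x2) * y2 by ring.
  by apply: rpredD; [apply: dvdz_mull | apply: dvdz_mulr].
apply: (big_ind2 R) => // mm _; apply: (RM _ _ _ _ (R0 _)).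
apply: (big_ind2 R); [exact: R0 | exact: RM | move=> i _].
elim: (mm i) => [|e IH]; first by rewrite !expr0; exact: R0.
by rewrite !exprS; apply: RM; [exact: H | exact: IH].
Qed.

Lemma homog_meval m (P : {mpoly int[m]}) d (c : int) (v : 'I_m -> int) :
  P \is d.-homog -> P.@[fun j => c * v j] = c ^+ d * P.@[v].
Proof.
move=> /dhomogP hP; rewrite !mevalE big_distrr /=.
apply: eq_big_seq => mm /hP hm.
under eq_bigr do rewrite exprMn.
rewrite big_split /= prodrXr -mdegE hm; ring.
Qed.

Lemma vpZ_ge p n (y : 'I_(p ^ n)) h : prime p -> (h <= n)%N ->
  (h <= vpZ y)%N = (p ^ h %| y)%N.
Proof.
move=> pp hn; rewrite /vpZ; case: eqP => [->|/eqP nz]; first by rewrite dvdn0 hn.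
by rewrite pfactor_dvdn // lt0n.
Qed.

Lemma minval_ge p n m (x : {ffun 'I_m -> 'I_(p ^ n)}) h : prime p -> (h <= n)%N ->
  (h <= minval x)%N = [forall j, p ^ h %| x j]%N.
Proof.
move=> pp hn; apply/idP/forallP => [H j | H].
  rewrite -vpZ_ge //; apply: leq_trans H _; rewrite /minval.
  have : j \in index_enum 'I_m by rewrite mem_index_enum.
  elim: (index_enum _) => // i r IH; rewrite inE big_cons => /orP[/eqP <-|/IH].
    exact: geq_minl.
  by move=> le; apply: leq_trans le; apply: geq_minr.
rewrite /minval; apply: (big_ind (fun r => h <= r)%N) => //.
  by move=> a b; rewrite leq_min => -> ->.
by move=> j _; rewrite vpZ_ge.
Qed.

Lemma minval_eq p n m (x : {ffun 'I_m -> 'I_(p ^ n)}) h : prime p -> (h < n)%N ->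
  (minval x == h) = [forall j, p ^ h %| x j]%N && ~~ [forall j, p ^ h.+1 %| x j]%N.
Proof.
move=> pp hn; rewrite eqn_leq leqNgt andbC !minval_ge // ltnW //.
Qed.

Lemma PoszX (a e : nat) : ((a ^ e)%N)%:Z = (a%:Z) ^+ e.
Proof. by rewrite -!natz natrX. Qed.

Lemma core n p d k m (F : 'I_k -> {mpoly int[m]}) h
  (x : {ffun 'I_m -> 'I_(p ^ n)}) (y : {ffun 'I_m -> 'I_(p ^ (n - d * h))})
  (t : 'I_m -> nat) :
  prime p -> (forall i, F i \is d.-homog) -> (d * h < n)%N -> (h < n)%N ->
  (forall j, val (x j) = p ^ h * (val (y j) + p ^ (n - d * h) * t j))%N ->
  (x \in solset p n F h) = (y \in solset p (n - d * h) F 0).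
Proof.
move=> pp hF hn hhn hx; rewrite !inE; congr andb.
  apply: eq_forallb => i.
  rewrite (@meval_eq _ _ _ (fun j => (p ^ h)%:Z * ((y j : nat) + p ^ (n - d * h) * t j)%N%:Z)); last first.
    by move=> j; rewrite /= hx PoszM.
  rewrite (@homog_meval _ _ _ _ _ (hF i)).
  have Epn : (p ^ n = p ^ (d * h) * p ^ (n - d * h))%N by rewrite -expnD subnKC // ltnW.
  rewrite [(p ^ n)%N]Epn PoszM -PoszX -expnM [(h * d)%N]mulnC.
  rewrite dvdz_mul2l; last by apply: lt0r_neq0; rewrite ltz_nat expn_gt0 prime_gt0.
  set A := _.@[_]; set B := (F i).@[_].
  have HAB : ((p ^ (n - d * h))%N%:Z %| A - B)%Z.
    apply: cong_meval => j; rewrite PoszD addrAC subrr add0r PoszM.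
    exact: dvdz_mulr.
  have -> : A = (A - B) + B by rewrite subrK.
  by rewrite rpredDl.
have n0 : (0 < n - d * h)%N by rewrite subn_gt0.
rewrite !minval_eq // ?subn_gt0 //.
have -> : [forall j, p ^ 0 %| y j]%N by apply/forallP => j; rewrite expn0 dvd1n.
have -> : [forall j, p ^ h %| x j]%N by apply/forallP => j; rewrite hx dvdn_mulr.
congr (_ && ~~ _); apply: eq_forallb => j.
rewrite hx expnSr dvdn_pmul2l ?expn_gt0 ?prime_gt0 // expn1 addnC dvdn_addr //.
by apply: dvdn_mulr; apply: dvdn_exp => //.
Qed.

Theorem lemma5p1 (n p d k m : nat) (F : 'I_k -> {mpoly int[m]}) (h : nat) :
  prime p ->
  (forall i, F i \is d.-homog) ->
  (0 < d)%N ->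
  (d * h < n)%N ->
  #|solset p n F h| = (p ^ ((d - 1) * h * m) * #|solset p (n - d * h) F 0|)%N.
Proof.
move=> pp hF d0 hn.
have p0 : (0 < p)%N by rewrite prime_gt0.
have M0 : (0 < p ^ (n - d * h))%N by rewrite expn_gt0 p0.
have hh : (h <= d * h)%N by rewrite leq_pmull.
have hhn : (h < n)%N by apply: leq_ltn_trans hn.
have En : (p ^ n = p ^ h * (p ^ (n - d * h) * p ^ ((d - 1) * h)))%N.
  rewrite -!expnD; congr (p ^ _)%N; rewrite mulnBl mul1n; lia.
have bound : forall (a : 'I_(p ^ (n - d * h))) (b : 'I_(p ^ ((d - 1) * h))),
    (p ^ h * (a + p ^ (n - d * h) * b) < p ^ n)%N.
  move=> a b; rewrite En ltn_pmul2l ?expn_gt0 ?p0 //.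
  apply: (@leq_trans (p ^ (n - d * h) * b.+1)).
    by rewrite mulnS ltn_add2r.
  by rewrite leq_mul2l ltn_ord orbT.
pose psi (u : {ffun 'I_m -> 'I_(p ^ (n - d * h))} * {ffun 'I_m -> 'I_(p ^ ((d - 1) * h))})
  : {ffun 'I_m -> 'I_(p ^ n)} := [ffun j => Ordinal (bound (u.1 j) (u.2 j))].
have psiE : forall u j, val (psi u j) = (p ^ h * (u.1 j + p ^ (n - d * h) * u.2 j))%N.
  by move=> u j; rewrite ffunE.
have psi_inj : injective psi.
  move=> [u1 u2] [v1 v2] E.
  have Ej : forall j, (u1 j + p ^ (n - d * h) * u2 j = v1 j + p ^ (n - d * h) * v2 j)%N.
    move=> j; have := congr1 (fun f : {ffun 'I_m -> 'I_(p ^ n)} => val (f j)) E; rewrite /= !psiE /=.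
    by move/eqP; rewrite eqn_pmul2l ?expn_gt0 ?p0 // => /eqP.
  congr pair; apply/ffunP => j; apply: val_inj; have := Ej j.
    move=> /(congr1 (fun z => z %% p ^ (n - d * h))%N).
    by rewrite /= addnC [(v1 j + _)%N]addnC !(mulnC (p ^ (n - d * h))%N) !modnMDl !modn_small.
  move=> /(congr1 (fun z => z %/ p ^ (n - d * h))%N).
  by rewrite /= addnC [(v1 j + _)%N]addnC !(mulnC (p ^ (n - d * h))%N) !divnMDl // !divn_small // !addn0.
have Eset : solset p n F h = psi @: setX (solset p (n - d * h) F 0) setT.
  apply/setP => x; apply/idP/imsetP.
    move=> hx.
    have hdiv : forall j, (p ^ h %| x j)%N.
      move: hx; rewrite inE => /andP[_]; rewrite minval_eq //.
      by case/andP => /forallP.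
    have yb : forall j, (x j %/ p ^ h %% p ^ (n - d * h) < p ^ (n - d * h))%N.
      by move=> j; rewrite ltn_pmod.
    have tb : forall j, (x j %/ p ^ h %/ p ^ (n - d * h) < p ^ ((d - 1) * h))%N.
      move=> j; rewrite ltn_divLR // ltn_divLR ?expn_gt0 ?p0 //.
      by rewrite mulnC [(p ^ ((d - 1) * h) * _)%N]mulnC -En ltn_ord.
    pose y : {ffun 'I_m -> 'I_(p ^ (n - d * h))} := [ffun j => Ordinal (yb j)].
    pose t : {ffun 'I_m -> 'I_(p ^ ((d - 1) * h))} := [ffun j => Ordinal (tb j)].
    have hxj : forall j, val (x j) = (p ^ h * (y j + p ^ (n - d * h) * t j))%N.
      move=> j; rewrite !ffunE /= addnC [(p ^ (n - d * h) * _)%N]mulnC -divn_eq mulnC divnK //.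
    exists (y, t); last by apply/ffunP => j; apply: val_inj; rewrite psiE /= hxj.
    rewrite in_setX in_setT andbT -(@core n p d k m F h x y (fun j => val (t j)) pp hF hn hhn hxj) //.
  move=> [[y t]]; rewrite in_setX => /andP[hy _] ->.
  rewrite (@core n p d k m F h _ y (fun j => val (t j)) pp hF hn hhn) // => j; by rewrite psiE.
rewrite Eset card_imset // cardsX cardsT card_ffun !card_ord mulnC -expnM.
by [].
Qed.
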